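(* Let $E$ be a finite extension of $\mathbf Q_p$ with ring of integers $O_E$. Let $\chi_{y,A}:A\to E$ be an ordinary character with values $(y_1,y_2,y_3)$ at $(Y_1,Y_2,Y_3)$. For $w\in\mathcal S_3$, define numbers $q(w,y)$ as follows: - $q(1,y)=1$; - $q(s_1,y)=1$ if $y_2^{-1}\in O_E$, and $q(s_1,y)=y_2^{-1}$ if $y_2\in O_E$; - $q(s_2,y)=y_2$ if $y_2^{-1}\in O_E$, and $q(s_2,y)=1$ if $y_2\in O_E$; - $q(s_1s_2,y)=q^{-1}y_1y_2$; - $q(s_2s_1,y)=q^{-1}y_1$; - $q(s_1s_2s_1,y)=q^{-1}y_1y_2$ if $y_2^{-1}\in O_E$, and $q(s_1s_2s_1,y)=q^{-1}y_1$ if $y_2\in O_E$. When $y_2$ is a unit, either of the two prescribed values may be used, consistently across $s_1,s_2,s_1s_2s_1$. Let $\Phi=1\otimes1$ be the canonical generator of $I_A(\chi_{y,A})$, and let $L(\chi_{y,A})$ be the $O_E$-submodule of $I_A(\chi_{y,A})$ that is free with basis $\{q(w,y)T_w\Phi\}_{w\in\mathcal S_3}$. Then $L(\chi_{y,A})=H_{O_E}\Phi$. In particular, $L(\chi_{y,A})$ is stable under $H_{O_E}$ and is an $O_E$-integral structure of $I_A(\chi_{y,A})$ (the canonical one).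
   Context: Let $q$ be a power of $p$, namely the residue cardinality of a non-archimedean local field $F$. Let $H$ be the $\mathbf Z[q]$-algebra ($q$ an indeterminate) generated by $T^{\pm1},S_1$ with relations $$(S_1+1)(S_1-q)=0,\quad T^3S_1=S_1T^3,\quad S_1S_2S_1=S_2S_1S_2,\quad TS_2=S_1T.$$ For a commutative ring $R$ with a map $\mathbf Z[q]\to R$, set $H_R=H\otimes_{\mathbf Z[q]}R$; for $R=E$ or $O_E$, the indeterminate $q$ is sent to the integer $q$. In $H\otimes\mathbf Z[q^{\pm1}]$, the elements $S_i$ are invertible, and one puts $$Y_1=qS_1^{-1}S_2^{-1}T,\qquad Y_2=S_2^{-1}TS_1,\qquad Y_3=q^{-1}TS_1S_2.$$ Let $A$ be the commutative subalgebra generated over $\mathbf Z[q^{\pm1}]$ by $Y_i^{\pm1}$; it is a Laurent polynomial algebra in the $Y_i$. A character $\chi:A\to E$ is a ring morphism sending $q$ to $q$, and it is determined by its values $(y_1,y_2,y_3)$. The standard module is $I_A(\chi)=H_E\otimes_{A,\chi}E$; it is 6-dimensional, and its canonical generator is $\Phi=1\otimes1$. The character $\chi$ is called ordinary if $\chi(A\cap H)\subset O_E$ (equivalently, $(y_1y_2y_3)^{\pm1}$, $q(y_iy_j)^{\pm1}$ and $qy_i^{\pm1}$ lie in $O_E$ for $i\neq j$) and moreover $y_1\in O_E$ and $y_3^{-1}\in O_E$. $\mathcal S_3$ is the Coxeter group with generators $s_1,s_2$ and length function $\ell$. One sets $T_{s_i}=S_i$ and $T_{ww'}=T_wT_{w'}$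 whenever $\ell(ww')=\ell(w)+\ell(w')$. An $O_E$-integral structure of a finite-dimensional $H_E$-module $M$ is a free $O_E$-submodule which is $H_{O_E}$-stable and contains an $E$-basis of $M$. *)

(* Defs.v *)
From HB Require Import structures.
From mathcomp Require Import all_boot all_order all_algebra.
Set Implicit Arguments. Unset Strict Implicit. Unset Printing Implicit Defensive.
Import Order.TTheory GRing.Theory Num.Theory.
Local Open Scope ring_scope.

Definition valuation_ring (E : fieldType) (O : pred E) : Prop :=
  [/\ 1 \in O,
      (forall x y, x \in O -> y \in O -> x - y \in O),
      (forall x y, x \in O -> y \in O -> x * y \in O) &
      (forall x, x != 0 -> (x \in O) \/ (x^-1 \in O))].

(* H_E-modules.  H is generated by T^{+-1}, S_1 with the relations         *)
(*   (S1+1)(S1-q)=0, T^3 S1 = S1 T^3, S1 S2 S1 = S2 S1 S2, T S2 = S1 T.     *)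
(* The last relation defines S2 = T^-1 S1 T.  A (left) H_E-module structure *)
(* on the column space E^6 is given by matrices t (invertible) and s1       *)
(* satisfying these relations, with q sent to the integer q.               *)
Section HeckeModule.
Variable (E : fieldType).
Local Notation M := 'M[E]_6.
Local Notation V := 'cV[E]_6.

Definition S2op (t s1 : M) : M := invmx t *m s1 *m t.

Definition hecke_rels (q : nat) (t s1 : M) : Prop :=
  [/\ t \in unitmx,
      (s1 + 1%:M) *m (s1 - (q%:R : E)%:M) = 0,
      (t *m t *m t) *m s1 = s1 *m (t *m t *m t) &
      s1 *m S2op t s1 *m s1 = S2op t s1 *m s1 *m S2op t s1].

Definition Y1op (q : nat) (t s1 : M) : M :=
  (q%:R : E) *: (invmx s1 *m invmx (S2op t s1) *m t).
Definition Y2op (t s1 : M) : M := invmx (S2op t s1) *m t *m s1.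
Definition Y3op (q : nat) (t s1 : M) : M :=
  (q%:R : E)^-1 *: (t *m s1 *m S2op t s1).

(* The cyclic R-submodule generated by phi, for the subring R (given as a   *)
(* predicate) of E: the smallest R-submodule containing phi and stable under *)
(* T, T^-1 and S1 (which generate H as an algebra).  With R = O_E this is    *)
(* H_{O_E} phi; with R = E (predT) it is H_E phi.                           *)
Inductive cyc_span (R : pred E) (t s1 : M) (phi : V) : V -> Prop :=
  | cs_gen : cyc_span R t s1 phi phi
  | cs_add v w : cyc_span R t s1 phi v -> cyc_span R t s1 phi w ->
                 cyc_span R t s1 phi (v + w)
  | cs_scale a v : a \in R -> cyc_span R t s1 phi v ->
                 cyc_span R t s1 phi (a *: v)
  | cs_T v : cyc_span R t s1 phi v -> cyc_span R t s1 phi (t *m v)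
  | cs_Tinv v : cyc_span R t s1 phi v -> cyc_span R t s1 phi (invmx t *m v)
  | cs_S1 v : cyc_span R t s1 phi v -> cyc_span R t s1 phi (s1 *m v).

End HeckeModule.

Inductive S3w := w1 | ws1 | ws2 | ws1s2 | ws2s1 | ws1s2s1.

Definition S3_all : seq S3w := [:: w1; ws1; ws2; ws1s2; ws2s1; ws1s2s1].

Definition Tw (E : fieldType) (t s1 : 'M[E]_6) (w : S3w) : 'M[E]_6 :=
  let s2 := S2op t s1 in
  match w with
  | w1 => 1%:M
  | ws1 => s1
  | ws2 => s2
  | ws1s2 => s1 *m s2
  | ws2s1 => s2 *m s1
  | ws1s2s1 => s1 *m s2 *m s1
  end.

(* The numbers q(w,y).  The boolean b selects the branch:                  *)
(*   b = true  : the branch "y2^-1 in O_E",  b = false : "y2 in O_E".       *)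
Definition qwy (E : fieldType) (b : bool) (q : nat) (y1 y2 : E) (w : S3w) : E :=
  let qi := (q%:R : E)^-1 in
  match w with
  | w1 => 1
  | ws1 => if b then 1 else y2^-1
  | ws2 => if b then y2 else 1
  | ws1s2 => qi * y1 * y2
  | ws2s1 => qi * y1
  | ws1s2s1 => if b then qi * y1 * y2 else qi * y1
  end.

Definition ordinary (E : fieldType) (O : pred E) (q : nat) (y1 y2 y3 : E) : Prop :=
  let qq := (q%:R : E) in
  [/\ y1 * y2 * y3 \in O /\ (y1 * y2 * y3)^-1 \in O,
      (qq * (y1 * y2) \in O /\ qq * (y1 * y2)^-1 \in O) /\
      (qq * (y1 * y3) \in O /\ qq * (y1 * y3)^-1 \in O) /\
      (qq * (y2 * y3) \in O /\ qq * (y2 * y3)^-1 \in O),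
      (qq * y1 \in O /\ qq * y1^-1 \in O) /\ (qq * y2 \in O /\ qq * y2^-1 \in O) /\
      (qq * y3 \in O /\ qq * y3^-1 \in O) &
      y1 \in O /\ y3^-1 \in O].

Definition Lspan (E : fieldType) (O : pred E) (b : bool) (q : nat) (y1 y2 : E)
    (t s1 : 'M[E]_6) (phi : 'cV[E]_6) (v : 'cV[E]_6) : Prop :=
  exists c : S3w -> E, (forall w, c w \in O) /\
    v = \sum_(w <- S3_all) (c w * qwy b q y1 y2 w) *: (Tw t s1 w *m phi).

(* Main.v *)
Require Import Defs.
From HB Require Import structures.
From mathcomp Require Import all_boot all_order all_algebra.
From mathcomp Require Import ring.
Set Implicit Arguments. Unset Strict Implicit. Unset Printing Implicit Defensive.
Import Order.TTheory GRing.Theory Num.Theory.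
Local Open Scope ring_scope.

Section Work.
Variables (E : fieldType) (q : nat) (t s1 : 'M[E]_6) (phi : 'cV[E]_6) (y1 y2 y3 : E).
Hypotheses (hq : (q%:R : E) != 0) (hy1 : y1 != 0) (hy2 : y2 != 0) (hy3 : y3 != 0).
Hypothesis hH : hecke_rels q t s1.
Hypotheses (hY1 : Y1op q t s1 *m phi = y1 *: phi)
  (hY2 : Y2op t s1 *m phi = y2 *: phi)
  (hY3 : Y3op q t s1 *m phi = y3 *: phi).

Local Notation qq := (q%:R : E).
Local Notation S2 := (S2op t s1).
Local Notation ti := (invmx t).

Lemma tU : t \in unitmx. Proof. by case: hH. Qed.

Lemma quad : s1 *m s1 = (qq - 1) *: s1 + qq%:M.
Proof.
case: hH => _ h _ _; move: h.
rewrite mulmxDl mulmxBr mul_mx_scalar mul1mx => /eqP.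
rewrite addrA subr_eq0 => /eqP h.
by rewrite -h scalerBl scale1r [_ - _ + s1]addrC addrA subrK addrC subrK.
Qed.

Lemma s1U : s1 \in unitmx.
Proof.
have h : s1 *m (qq^-1 *: (s1 - (qq - 1)%:M)) = 1%:M.
  rewrite -scalemxAr mulmxBr quad mul_mx_scalar addrAC subrr add0r scale_scalar_mx mulVf //.
by case: (mulmx1_unit h).
Qed.

Lemma S2U : S2 \in unitmx.
Proof. by rewrite /S2op !unitmx_mul unitmx_inv tU s1U. Qed.

Lemma quadv (v : 'cV[E]_6) : s1 *m (s1 *m v) = qq *: v + (qq - 1) *: (s1 *m v).
Proof. by rewrite mulmxA quad mulmxDl mul_scalar_mx -scalemxAl addrC. Qed.

Lemma TS2 : t *m S2 = s1 *m t.
Proof. by rewrite /S2op !mulmxA mulmxV ?tU // mul1mx. Qed.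

Lemma braid : s1 *m S2 *m s1 = S2 *m s1 *m S2.
Proof. by case: hH. Qed.

Lemma eqa : t *m phi = (qq^-1 * y1) *: (S2 *m (s1 *m phi)).
Proof.
have h : S2 *m (s1 *m (Y1op q t s1 *m phi)) = qq *: (t *m phi).
  rewrite /Y1op -scalemxAl -!scalemxAr !mulmxA (mulmxK s1U) mulmxV ?S2U //.
  by rewrite mul1mx.
move: h; rewrite hY1 -!scalemxAr => h.
by rewrite -scalerA h scalerA mulVf // scale1r.
Qed.

Lemma eqb : t *m (s1 *m phi) = y2 *: (S2 *m phi).
Proof.
have h : S2 *m (Y2op t s1 *m phi) = t *m (s1 *m phi).
  by rewrite /Y2op !mulmxA mulmxV ?S2U // mul1mx.
by rewrite -h hY2 scalemxAr.
Qed.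

Lemma eqc : t *m (s1 *m (S2 *m phi)) = (qq * y3) *: phi.
Proof.
have h : qq *: (Y3op q t s1 *m phi) = t *m (s1 *m (S2 *m phi)).
  by rewrite /Y3op -scalemxAl scalerA divff // scale1r !mulmxA.
by rewrite -h hY3 scalerA.
Qed.

Definition vw w := Tw t s1 w *m phi.
Definition vec (c : S3w -> E) := \sum_(w <- S3_all) c w *: vw w.

Lemma vw1 : vw w1 = phi. Proof. by rewrite /vw /= mul1mx. Qed.
Lemma vwa : vw ws1 = s1 *m phi. Proof. by []. Qed.
Lemma vwb : vw ws2 = S2 *m phi. Proof. by []. Qed.
Lemma vwab : vw ws1s2 = s1 *m (S2 *m phi). Proof. by rewrite /vw /= mulmxA. Qed.
Lemma vwba : vw ws2s1 = S2 *m (s1 *m phi). Proof. by rewrite /vw /= mulmxA. Qed.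
Lemma vwaba : vw ws1s2s1 = s1 *m (S2 *m (s1 *m phi)). Proof. by rewrite /vw /= !mulmxA. Qed.
Lemma vwaba' : vw ws1s2s1 = S2 *m (s1 *m (S2 *m phi)). Proof. by rewrite /vw /= braid !mulmxA. Qed.

Lemma tv1 : t *m vw w1 = (qq^-1 * y1) *: vw ws2s1.
Proof. by rewrite vw1 eqa vwba. Qed.
Lemma tva : t *m vw ws1 = y2 *: vw ws2.
Proof. by rewrite vwa eqb. Qed.
Lemma tvb : t *m vw ws2 = (qq^-1 * y1) *: vw ws1s2s1.
Proof. by rewrite vwb mulmxA TS2 -mulmxA eqa -scalemxAr vwaba. Qed.
Lemma tvab : t *m vw ws1s2 = (qq * y3) *: vw w1.
Proof. by rewrite vwab eqc vw1. Qed.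
Lemma tvba : t *m vw ws2s1 = y2 *: vw ws1s2.
Proof. by rewrite vwba mulmxA TS2 -mulmxA eqb -scalemxAr vwab. Qed.
Lemma tvaba : t *m vw ws1s2s1 = (qq * y3) *: vw ws1.
Proof. by rewrite vwaba' mulmxA TS2 -mulmxA eqc -scalemxAr vwa. Qed.

Lemma tinv a b k : k != 0 -> t *m a = k *: b -> ti *m b = k^-1 *: (a : 'cV[E]_6).
Proof.
move=> hk h; rewrite -[b](scalerK hk) -h -scalemxAr mulKmx ?tU //.
Qed.

Lemma sv1 : s1 *m vw w1 = vw ws1. Proof. by rewrite vw1. Qed.
Lemma sva : s1 *m vw ws1 = qq *: vw w1 + (qq - 1) *: vw ws1.
Proof. by rewrite vwa quadv vw1. Qed.
Lemma svb : s1 *m vw ws2 = vw ws1s2. Proof. by rewrite vwb vwab. Qed.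
Lemma svab : s1 *m vw ws1s2 = qq *: vw ws2 + (qq - 1) *: vw ws1s2.
Proof. by rewrite vwab quadv vwb. Qed.
Lemma svba : s1 *m vw ws2s1 = vw ws1s2s1. Proof. by rewrite vwba vwaba. Qed.
Lemma svaba : s1 *m vw ws1s2s1 = qq *: vw ws2s1 + (qq - 1) *: vw ws1s2s1.
Proof. by rewrite vwaba quadv vwba. Qed.

Definition fT (u x : S3w) : E :=
  match u, x with
  | w1, ws2s1 => qq^-1 * y1
  | ws1, ws2 => y2
  | ws2, ws1s2s1 => qq^-1 * y1
  | ws1s2, w1 => qq * y3
  | ws2s1, ws1s2 => y2
  | ws1s2s1, ws1 => qq * y3
  | _, _ => 0 end.

Definition fTi (u x : S3w) : E :=
  match u, x with
  | ws2s1, w1 => (qq^-1 * y1)^-1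
  | ws2, ws1 => y2^-1
  | ws1s2s1, ws2 => (qq^-1 * y1)^-1
  | w1, ws1s2 => (qq * y3)^-1
  | ws1s2, ws2s1 => y2^-1
  | ws1, ws1s2s1 => (qq * y3)^-1
  | _, _ => 0 end.

Definition fS (u x : S3w) : E :=
  match u, x with
  | w1, ws1 => 1
  | ws1, w1 => qq
  | ws1, ws1 => qq - 1
  | ws2, ws1s2 => 1
  | ws1s2, ws2 => qq
  | ws1s2, ws1s2 => qq - 1
  | ws2s1, ws1s2s1 => 1
  | ws1s2s1, ws2s1 => qq
  | ws1s2s1, ws1s2s1 => qq - 1
  | _, _ => 0 end.

Ltac vecsimp := rewrite /vec /S3_all !big_cons big_nil /= ?scale0r ?scale1r ?add0r ?addr0.

Lemma actT u : t *m vw u = vec (fT u).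
Proof.
case: u; vecsimp; by rewrite ?tv1 ?tva ?tvb ?tvab ?tvba ?tvaba.
Qed.

Lemma actS u : s1 *m vw u = vec (fS u).
Proof.
case: u; vecsimp; by rewrite ?sv1 ?sva ?svb ?svab ?svba ?svaba.
Qed.

Lemma qy1 : qq^-1 * y1 != 0. Proof. by rewrite mulf_neq0 ?invr_eq0. Qed.
Lemma qy3 : qq * y3 != 0. Proof. by rewrite mulf_neq0. Qed.

Lemma actTi u : ti *m vw u = vec (fTi u).
Proof.
case: u; vecsimp.
- exact: tinv qy3 tvab.
- exact: tinv qy3 tvaba.
- exact: tinv hy2 tva.
- exact: tinv hy2 tvba.
- exact: tinv qy1 tv1.
- exact: tinv qy1 tvb.
Qed.

Lemma act (M : 'M[E]_6) f : (forall u, M *m vw u = vec (f u)) ->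
  forall c, M *m vec c = vec (fun x => \sum_(u <- S3_all) c u * f u x).
Proof.
move=> h c; rewrite /vec mulmx_sumr.
under eq_bigr => u _ do rewrite -scalemxAr h scaler_sumr.
rewrite exchange_big; apply: eq_bigr => x _.
rewrite scaler_suml; apply: eq_bigr => u _; by rewrite scalerA.
Qed.

Lemma vec_add c d : vec c + vec d = vec (fun w => c w + d w).
Proof. by rewrite /vec -big_split; apply: eq_bigr => w _; rewrite scalerDl. Qed.

Lemma vec_scale a c : a *: vec c = vec (fun w => a * c w).
Proof. by rewrite /vec scaler_sumr; apply: eq_bigr => w _; rewrite scalerA. Qed.

Lemma vec_ext c d : (forall w, c w = d w) -> vec c = vec d.
Proof. by move=> h; apply: eq_bigr => w _; rewrite h. Qed.

Definition d1 (w : S3w) : E := if w is w1 then 1 else 0.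
Lemma vec_d1 : vec d1 = phi.
Proof. by vecsimp; rewrite vw1. Qed.

Variables (O : pred E) (b : bool).
Hypothesis hO : valuation_ring O.
Hypotheses (Oy123 : y1 * y2 * y3 \in O) (Oy123i : (y1 * y2 * y3)^-1 \in O)
  (Oqy12i : qq * (y1 * y2)^-1 \in O) (Oqy1i : qq * y1^-1 \in O)
  (Oqy2i : qq * y2^-1 \in O) (Oqy2 : qq * y2 \in O) (Oy1 : y1 \in O).
Hypothesis hb : if b then y2^-1 \in O else y2 \in O.

Lemma O1 : 1 \in O. Proof. by case: hO. Qed.
Lemma OB x y : x \in O -> y \in O -> x - y \in O. Proof. by case: hO => _ h _ _; apply: h. Qed.
Lemma OM x y : x \in O -> y \in O -> x * y \in O. Proof. by case: hO => _ _ h _; apply: h. Qed.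
Lemma O0 : 0 \in O. Proof. by rewrite -(subrr 1) OB ?O1. Qed.
Lemma ON x : x \in O -> - x \in O. Proof. by move=> h; rewrite -sub0r OB ?O0. Qed.
Lemma OD x y : x \in O -> y \in O -> x + y \in O.
Proof. by move=> hx hy; rewrite -[y]opprK OB ?ON. Qed.
Lemma Onat n : (n%:R : E) \in O.
Proof. elim: n => [|n IH]; first exact: O0. by rewrite -addn1 natrD OD ?O1. Qed.
Lemma Osum (s : seq S3w) F : (forall w, F w \in O) -> \sum_(w <- s) F w \in O.
Proof.
move=> h; elim: s => [|w s IH]; first by rewrite big_nil O0.
by rewrite big_cons OD.
Qed.

Local Notation Q := (qwy b q y1 y2).

Lemma Q_neq0 w : Q w != 0.
Proof.
case: b; case: w => /=; rewrite ?oner_eq0 ?invr_eq0 //;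
  repeat apply: mulf_neq0; rewrite ?invr_eq0 //.
Qed.

Definition LS v := exists c : S3w -> E, (forall w, c w \in O) /\ v = vec (fun w => c w * Q w).

Lemma stable (M : 'M[E]_6) f : (forall u, M *m vw u = vec (f u)) ->
  (forall u x, Q u * f u x / Q x \in O) -> forall v, LS v -> LS (M *m v).
Proof.
move=> hM hO' v [c [hc ->]]; rewrite (act hM).
exists (fun x => \sum_(u <- S3_all) c u * (Q u * f u x / Q x)); split.
  by move=> x; apply: Osum => u; rewrite OM.
apply: vec_ext => x; rewrite mulr_suml; apply: eq_bigr => u _.
by rewrite -[RHS]mulrA divfK ?Q_neq0 // mulrA.
Qed.

Ltac solveO := match goal with
  | |- is_true (?e \in O) =>
    first [ exact O0 |
      match goal with H : is_true (?k \in O) |- _ =>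
        rewrite (_ : e = k); [exact H | field; rewrite ?oner_eq0 ?hq ?hy1 ?hy2 ?hy3 //; fail] end ]
  end.

Lemma stableT : forall v, LS v -> LS (t *m v).
Proof.
apply: (stable actT) => u x; move: hb; have Oq := Onat q; have O0' := O0; have O1' := O1; have Oq1 := OB Oq O1.
case: b => hb'; case: u; case: x => /=; rewrite ?(mulr0, mul0r); solveO.
Qed.

Lemma stableTi : forall v, LS v -> LS (ti *m v).
Proof.
apply: (stable actTi) => u x; move: hb; have Oq := Onat q; have O0' := O0; have O1' := O1; have Oq1 := OB Oq O1.
case: b => hb'; case: u; case: x => /=; rewrite ?(mulr0, mul0r); solveO.
Qed.

Lemma stableS : forall v, LS v -> LS (s1 *m v).
Proof.
apply: (stable actS) => u x; move: hb; have Oq := Onat q; have O0' := O0; have O1' := O1; have Oq1 := OB Oq O1.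
case: b => hb'; case: u; case: x => /=; rewrite ?(mulr0, mul0r).
all: try solveO.
all: try (have Oy12 := OM Oy1 hb'; solveO).
Qed.

Local Notation P := (cyc_span O t s1 phi).

Lemma P0 : P 0.
Proof. rewrite -(scale0r phi); apply: cs_scale; [exact: O0 | exact: cs_gen]. Qed.

Lemma Psum (s : seq S3w) F : (forall w, P (F w)) -> P (\sum_(w <- s) F w).
Proof.
move=> h; elim: s => [|w s IH]; first by rewrite big_nil; apply: P0.
by rewrite big_cons; apply: cs_add.
Qed.

Lemma Pe w : P (Q w *: vw w).
Proof.
move: hb; case: b => hb'; case: w => /=.
- by rewrite scale1r vw1; apply: cs_gen.
- by rewrite scale1r -sv1 vw1; apply: cs_S1; apply: cs_gen.
- by rewrite -tva vwa; apply: cs_T; apply: cs_S1; apply: cs_gen.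
- have -> : (qq^-1 * y1 * y2) *: vw ws1s2 = (y1 * y2 * y3) *: (ti *m vw w1).
    rewrite (tinv qy3 tvab) scalerA; congr (_ *: _); field; by rewrite ?hq ?hy1 ?hy2 ?hy3.
  by rewrite vw1; apply: cs_scale => //; apply: cs_Tinv; apply: cs_gen.
- by rewrite -tv1 vw1; apply: cs_T; apply: cs_gen.
- have -> : (qq^-1 * y1 * y2) *: vw ws1s2s1 = t *m (t *m (s1 *m vw w1)).
    rewrite sv1 tva -scalemxAr tvb scalerA; congr (_ *: _); field; by rewrite ?hq ?hy1 ?hy2 ?hy3.
  by rewrite vw1; apply: cs_T; apply: cs_T; apply: cs_S1; apply: cs_gen.
- by rewrite scale1r vw1; apply: cs_gen.
- have -> : y2^-1 *: vw ws1 = ti *m (ti *m (s1 *m (t *m vw w1))).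
    rewrite tv1 -!scalemxAr svba (tinv qy1 tvb) -!scalemxAr (tinv hy2 tva) !scalerA.
    congr (_ *: _); field; by rewrite ?hq ?hy1 ?hy2 ?hy3.
  by rewrite vw1; apply: cs_Tinv; apply: cs_Tinv; apply: cs_S1; apply: cs_T; apply: cs_gen.
- have -> : 1 *: vw ws2 = ti *m (s1 *m (t *m vw w1)).
    rewrite tv1 -!scalemxAr svba (tinv qy1 tvb) !scalerA.
    congr (_ *: _); field; by rewrite ?hq ?hy1 ?hy2 ?hy3.
  by rewrite vw1; apply: cs_Tinv; apply: cs_S1; apply: cs_T; apply: cs_gen.
- have -> : (qq^-1 * y1 * y2) *: vw ws1s2 = (y1 * y2 * y3) *: (ti *m vw w1).
    rewrite (tinv qy3 tvab) scalerA; congr (_ *: _); field; by rewrite ?hq ?hy1 ?hy2 ?hy3.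
  by rewrite vw1; apply: cs_scale => //; apply: cs_Tinv; apply: cs_gen.
- by rewrite -tv1 vw1; apply: cs_T; apply: cs_gen.
- by rewrite -svba scalemxAr -tv1 vw1; apply: cs_S1; apply: cs_T; apply: cs_gen.
Qed.

Lemma LS_P v : LS v -> P v.
Proof.
case=> c [hc ->]; rewrite /vec; apply: Psum => w.
by rewrite -scalerA; apply: cs_scale => //; apply: Pe.
Qed.

Lemma P_LS v : P v -> LS v.
Proof.
elim=> {v}.
- exists d1; split; first by case; rewrite /= ?O0 ?O1.
  rewrite -{1}vec_d1; apply: vec_ext; case; rewrite /= ?mul1r ?mul0r //.
- move=> v w _ [c [hc ->]] _ [d [hd ->]]; exists (fun w => c w + d w); split.
    by move=> x; apply: OD.
  by rewrite vec_add; apply: vec_ext => x; rewrite mulrDl.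
- move=> a v ha _ [c [hc ->]]; exists (fun w => a * c w); split.
    by move=> x; apply: OM.
  by rewrite vec_scale; apply: vec_ext => x; rewrite mulrA.
- by move=> v _; apply: stableT.
- by move=> v _; apply: stableTi.
- by move=> v _; apply: stableS.
Qed.

Lemma surj v : cyc_span predT t s1 phi v -> exists d, v = vec d.
Proof.
elim=> {v}.
- by exists d1; rewrite vec_d1.
- by move=> v w _ [c ->] _ [d ->]; exists (fun w => c w + d w); rewrite vec_add.
- by move=> a v _ _ [c ->]; exists (fun w => a * c w); rewrite vec_scale.
- by move=> v _ [c ->]; eexists; rewrite (act actT).
- by move=> v _ [c ->]; eexists; rewrite (act actTi).
- by move=> v _ [c ->]; eexists; rewrite (act actS).
Qed.

Definition idx (j : 'I_6) := nth w1 S3_all j.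
Definition Bm : 'M[E]_6 := \matrix_(i, j) vw (idx j) i 0.
Definition colv (d : S3w -> E) : 'cV[E]_6 := \col_j d (idx j).

Lemma Bvec d : Bm *m colv d = vec d.
Proof.
apply/matrixP => i k; rewrite (ord1 k) !mxE /vec summxE (big_nth w1) big_mkord.
by apply: eq_bigr => j _; rewrite !mxE mulrC.
Qed.

Lemma indep : (forall v, cyc_span predT t s1 phi v) -> forall c, vec c = 0 -> forall w, c w = 0.
Proof.
move=> hg.
have [D hD] : exists D : 'I_6 -> (S3w -> E), forall j, delta_mx j 0 = vec (D j).
  apply: (@fin_all_exists _ (fun _ => S3w -> E) (fun j d => delta_mx j 0 = vec d)) => j; exact: surj.
have BU : Bm \in unitmx.
  pose X : 'M[E]_6 := \matrix_(i, j) colv (D j) i 0.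
  have h : Bm *m X = 1%:M.
    apply/matrixP => i j.
    transitivity ((Bm *m colv (D j)) i 0).
      by rewrite !mxE; apply: eq_bigr => k _; rewrite !mxE.
    by rewrite Bvec -hD !mxE eqxx andbT.
  by case: (mulmx1_unit h).
move=> c hc w.
have h0 : colv c = 0 by rewrite -(mulKmx BU (colv c)) Bvec hc mulmx0.
have [j <-] : exists j, idx j = w.
  case: w.
  - by exists (@Ordinal 6 0 isT).
  - by exists (@Ordinal 6 1 isT).
  - by exists (@Ordinal 6 2 isT).
  - by exists (@Ordinal 6 3 isT).
  - by exists (@Ordinal 6 4 isT).
  - by exists (@Ordinal 6 5 isT).
by move/matrixP: h0 => /(_ j 0); rewrite !mxE.
Qed.

Lemma master : (forall v, cyc_span predT t s1 phi v) ->
  (forall v, Lspan O b q y1 y2 t s1 phi v <-> cyc_span O t s1 phi v)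
  /\ (forall c : S3w -> E,
        \sum_(w <- S3_all) (c w * qwy b q y1 y2 w) *: (Tw t s1 w *m phi) = 0 ->
        forall w, c w = 0)
  /\ (forall v, Lspan O b q y1 y2 t s1 phi v ->
        [/\ Lspan O b q y1 y2 t s1 phi (t *m v),
            Lspan O b q y1 y2 t s1 phi (invmx t *m v) &
            Lspan O b q y1 y2 t s1 phi (s1 *m v)]).
Proof.
move=> hg; split; [|split].
- by move=> v; split; [apply: LS_P | apply: P_LS].
- move=> c hc w; have := indep hg hc w => /eqP.
  by rewrite mulf_eq0 (negbTE (Q_neq0 w)) orbF => /eqP.
- by move=> v hv; split; [apply: stableT | apply: stableTi | apply: stableS].
Qed.

End Work.
Theorem proposition3
  (* residue characteristic p and q = p^f *)
  (p f : nat) (hp : prime p) (hf : (0 < f)%N)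
  (* coefficient field E (char 0) with valuation ring O_E, p not a unit *)
  (E : fieldType) (O : pred E)
  (hchar : forall n : nat, (n.+1)%:R != 0 :> E)
  (hO : valuation_ring O) (hpO : (p%:R : E)^-1 \notin O)
  (* the standard module I_A(chi) with canonical generator Phi, presented as *)
  (* a 6-dimensional H_E-module generated by a vector on which A acts by chi *)
  (t s1 : 'M[E]_6) (phi : 'cV[E]_6)
  (hH : hecke_rels (p ^ f) t s1)
  (y1 y2 y3 : E) (hy1 : y1 != 0) (hy2 : y2 != 0) (hy3 : y3 != 0)
  (hY1 : Y1op (p ^ f) t s1 *m phi = y1 *: phi)
  (hY2 : Y2op t s1 *m phi = y2 *: phi)
  (hY3 : Y3op (p ^ f) t s1 *m phi = y3 *: phi)
  (hgen : forall v, cyc_span predT t s1 phi v)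
  (* chi is ordinary *)
  (hord : ordinary O (p ^ f) y1 y2 y3)
  (* choice of branch for q(w,y) *)
  (b : bool) (hb : if b then y2^-1 \in O else y2 \in O) :
  (* L(chi) = H_{O_E} Phi *)
  (forall v, Lspan O b (p ^ f) y1 y2 t s1 phi v <-> cyc_span O t s1 phi v)
  (* the q(w,y) T_w Phi are E-linearly independent (hence an E-basis of the *)
  (* 6-dimensional module and an O_E-basis of L(chi)) *)
  /\ (forall c : S3w -> E,
        \sum_(w <- S3_all) (c w * qwy b (p ^ f) y1 y2 w) *: (Tw t s1 w *m phi) = 0 ->
        forall w, c w = 0)
  (* L(chi) is H_{O_E}-stable *)
  /\ (forall v, Lspan O b (p ^ f) y1 y2 t s1 phi v ->
        [/\ Lspan O b (p ^ f) y1 y2 t s1 phi (t *m v),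
            Lspan O b (p ^ f) y1 y2 t s1 phi (invmx t *m v) &
            Lspan O b (p ^ f) y1 y2 t s1 phi (s1 *m v)]).
Proof.
have hpf : (0 < p ^ f)%N by rewrite expn_gt0 prime_gt0.
have hq : ((p ^ f)%:R : E) != 0 by rewrite -(prednK hpf); exact: hchar.
move: hord; rewrite /ordinary => -[[Oa Ob] [[Oc Od] [[Oe Of] [Og Oh]]] [[Oi Oj] [[Ok Ol] [Om On]]] [Oo Op]].
exact: (master hq hy1 hy2 hy3 hH hY1 hY2 hY3 hO Oa Ob Od Oj Ol Ok Oo hb hgen).
Qed.
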